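(* If $G$ is a graph with minimum degree $\delta(G)\ge 2$, then $\Gamma_{\rm cer}(G)\le\Gamma(G)$.
   Context: All graphs are finite and simple; $\delta(G)$ is the minimum degree. A set $D\subseteq V_G$ is a dominating set of $G$ if every vertex of $V_G-D$ has a neighbor in $D$; $\Gamma(G)$ is the maximum cardinality of a minimal (with respect to inclusion) dominating set. A set $D$ is a certified dominating set of $G$ if $D$ is dominating and every vertex of $D$ has either zero or at least two neighbors in $V_G-D$; $\Gamma_{\rm cer}(G)$ is the maximum cardinality of a minimal (with respect to inclusion) certified dominating set. *)

(* Defs.v *)
From mathcomp Require Import all_boot.
Set Implicit Arguments. Unset Strict Implicit. Unset Printing Implicit Defensive.

Section Graph.
Variable T : finType.
Variable e : rel T.

Definition simple_graph := symmetric e /\ irreflexive e.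

Definition nbhd (v : T) : {set T} := [set u | e v u].

Definition min_deg_ge (k : nat) := forall v : T, k <= #|nbhd v|.

Definition dominating (D : {set T}) : bool :=
  [forall v, (v \notin D) ==> [exists u in D, e v u]].

Definition certified (D : {set T}) : bool :=
  dominating D &&
  [forall v in D, (#|nbhd v :\: D| == 0) || (2 <= #|nbhd v :\: D|)].

Definition Gamma : nat := \max_(D : {set T} | minset dominating D) #|D|.

Definition Gamma_cer : nat := \max_(D : {set T} | minset certified D) #|D|.
End Graph.

(* Main.v *)
Require Import Defs.
From mathcomp Require Import all_boot.
Set Implicit Arguments. Unset Strict Implicit. Unset Printing Implicit Defensive.

Lemma two_elem (T : finType) (S : {set T}) (a : T) :
  2 <= #|S| -> exists2 w, w \in S & w != a.
Proof.
move=> H; case: (boolP [exists w in S, w != a]).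
  by case/exists_inP=> w ? ?; exists w.
move/exists_inPn=> H2; have : S \subset [set a].
  by apply/subsetP=> w /H2; rewrite negbK in_set1.
by move/subset_leq_card; rewrite cards1 => H3; have := leq_trans H H3.
Qed.

Section Main.
Variable T : finType.
Variable e : rel T.
Hypothesis esym : symmetric e.
Hypothesis eirr : irreflexive e.
Hypothesis deg : forall v : T, 2 <= #|nbhd e v|.
Variable D : {set T}.
Hypothesis certD : certified e D.

Definition D0 : {set T} := [set u in D | nbhd e u \subset D].
Definition Aok (J : {set T}) := [forall x in J, exists w in D :\: J, e x w].
Definition Pok (J : {set T}) := [&& J \subset D0, J != set0 & Aok J].
Definition mu (J : {set T}) := #|[set p in setX J J | e p.1 p.2]|.

Lemma domD : dominating e D.
Proof. by case/andP: certD. Qed.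

Lemma certD2 v : v \in D -> (#|nbhd e v :\: D| == 0) || (2 <= #|nbhd e v :\: D|).
Proof. by case/andP: certD => _ /forall_inP; apply. Qed.

Lemma notD0 v : v \in D -> v \notin D0 -> 2 <= #|nbhd e v :\: D|.
Proof.
move=> vD; rewrite inE vD /= => /subsetPn [w wN wD].
case/orP: (certD2 vD) => //; rewrite cards_eq0 => /eqP E.
have : w \in nbhd e v :\: D by rewrite inE wD wN.
by rewrite E inE.
Qed.

Lemma good J :
  Pok J -> (forall J', Pok J' -> #|J'| <= #|J|) ->
  (forall J', Pok J' -> #|J'| = #|J| -> mu J <= mu J') ->
  certified e (D :\: J).
Proof.
rewrite /Pok /Aok; case/and3P=> JD0 Jn0 /forall_inP AJ Hmax Hmin.
have JD : J \subset D.
  by apply/subsetP=> x /(subsetP JD0); rewrite inE => /andP[].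
apply/andP; split.
  apply/forallP=> v; apply/implyP; rewrite inE negb_and negbK => /orP [vJ|vD].
    by have := AJ v vJ.
  move/forallP: domD => /(_ v); rewrite vD /= => /exists_inP [u uD evu].
  apply/exists_inP; exists u => //; rewrite inE uD andbT.
  apply/negP=> /(subsetP JD0); rewrite inE uD /= => /subsetP /(_ v).
  by rewrite inE esym evu => /(_ isT); rewrite (negbTE vD).
apply/forall_inP=> y; rewrite inE => /andP [yJ yD].
case: (boolP (y \in D0)) => yD0; last first.
  apply/orP; right; apply: leq_trans (notD0 yD yD0) _.
  apply: subset_leq_card; apply/subsetP=> w; rewrite !inE.
  by case/andP=> H1 H2; rewrite H2 (negbTE H1) andbF.
have NyD : nbhd e y \subset D by move: yD0; rewrite inE => /andP [].
have E : nbhd e y :\: (D :\: J) = nbhd e y :&: J.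
  apply/setP=> w; case: (boolP (w \in nbhd e y)) => wN.
    have wD := subsetP NyD w wN; rewrite !inE in wN *.
    by rewrite wD wN andbT !andbT negbK.
  rewrite !inE in wN *; by rewrite (negbTE wN) !andbF.
rewrite E; case: (boolP (#|nbhd e y :&: J| == 1)); last first.
  move=> H; case: (posnP #|nbhd e y :&: J|) => [->//|p].
  by apply/orP; right; rewrite ltn_neqAle eq_sym H.
case/cards1P=> x Ex; exfalso.
have xin : x \in nbhd e y :&: J by rewrite Ex set11.
move: (xin); rewrite !inE => /andP [eyx xJ].
have onlyx : forall z, z \in J -> e y z -> z = x.
  by move=> z zJ eyz; apply/set1P; rewrite -Ex !inE eyz zJ.
have xD0 := subsetP JD0 x xJ.
have NxD : nbhd e x \subset D by move: xD0; rewrite inE => /andP [].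
have xD : x \in D by move: xD0; rewrite inE => /andP [].
have notyw : forall z w, z \in J -> z != x -> e z w -> w != y.
  move=> z w zJ zx ezw; apply/eqP=> E'; rewrite E' in ezw.
  have eyz : e y z by rewrite esym.
  by rewrite (onlyx z zJ eyz) eqxx in zx.
case: (boolP [exists w in D :\: J, (e x w) && (w != y)]).
  case/exists_inP => w wDJ /andP [exw wny].
  have P2 : Pok (y |: J).
    rewrite /Pok /Aok; apply/and3P; split.
    - apply/subsetP => z; rewrite in_setU1 => /orP [/eqP->|/(subsetP JD0)] //.
    - by apply/set0Pn; exists y; exact: setU11.
    - apply/forall_inP => z; rewrite !inE => /orP [/eqP->|zJ].
        have [w' w'N w'x] := two_elem x (deg y).
        apply/exists_inP; exists w'; last by move: w'N; rewrite inE.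
        have w'D := subsetP NyD _ w'N.
        rewrite !inE w'D andbT negb_or; apply/andP; split.
          by apply/eqP=> E'; rewrite E' inE eirr in w'N.
        apply/negP=> w'J; rewrite inE in w'N.
        by rewrite (onlyx _ w'J w'N) eqxx in w'x.
      case: (eqVneq z x) => [->|zx].
        apply/exists_inP; exists w => //.
        by rewrite !inE in wDJ *; rewrite negb_or wny -andbA wDJ.
      have := AJ z zJ; case/exists_inP => w' w'DJ ezw'.
      apply/exists_inP; exists w' => //.
      by rewrite !inE in w'DJ *; rewrite negb_or -andbA w'DJ andbT (notyw z).
  by have := Hmax _ P2; rewrite cardsU1 yJ add1n ltnn.
move/exists_inPn => Hno.
have xy : x != y by apply/eqP=> E'; rewrite -E' xJ in yJ.
set J3 := y |: (J :\ x).
have P3 : Pok J3.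
  rewrite /Pok /Aok; apply/and3P; split.
  - apply/subsetP => z; rewrite in_setU1 in_setD1 => /orP [/eqP->|/andP [_ /(subsetP JD0)]] //.
  - by apply/set0Pn; exists y; exact: setU11.
  - apply/forall_inP => z; rewrite !inE => /orP [/eqP->|/andP [zx zJ]].
      apply/exists_inP; exists x => //.
      by rewrite !inE xD eqxx negb_or xy.
    have := AJ z zJ; case/exists_inP => w' w'DJ ezw'.
    apply/exists_inP; exists w' => //.
    rewrite !inE in w'DJ *; case/andP: w'DJ => w'J w'D.
    by rewrite w'D (negbTE w'J) andbF orbF andbT (notyw z w').
have c3 : #|J3| = #|J|.
  rewrite cardsU1 (cardsD1 x J) xJ !inE negb_and negbK.
  by rewrite yJ orbT.
have := Hmin _ P3 c3.
suff : mu J3 < mu J by move=> H1 H2; have := leq_trans H1 H2; rewrite ltnn.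
apply: proper_card; apply/properP; split.
  apply/subsetP => [[a b]]; rewrite !inE /= => /andP [/andP [aJ3 bJ3] eab].
  have aux : forall a b, (a == y) || (a != x) && (a \in J) ->
       (b == y) || (b != x) && (b \in J) -> e a b -> a != y.
    move=> a' b' _ hb eab'; apply/eqP=> E'; rewrite E' in eab'.
    case/orP: hb => [/eqP E2|/andP [bx bJ]].
      by rewrite E2 eirr in eab'.
    by rewrite (onlyx _ bJ eab') eqxx in bx.
  have ay := aux a b aJ3 bJ3 eab.
  have eba : e b a by rewrite esym.
  have by' := aux b a bJ3 aJ3 eba.
  move: aJ3 bJ3; rewrite (negbTE ay) (negbTE by') /= => /andP [_ aJ] /andP [_ bJ].
  by rewrite aJ bJ eab.
have [z zN zy] := two_elem y (deg x).
have zD := subsetP NxD z zN.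
rewrite inE in zN.
have zJ : z \in J.
  case: (boolP (z \in J)) => // zJ; exfalso.
  have H : z \in D :\: J by rewrite inE zJ zD.
  by move: (Hno z H); rewrite zN zy.
exists (x, z); rewrite !inE /=.
  by rewrite xJ zJ zN.
by rewrite eqxx (negbTE xy).
Qed.

Lemma min_cert_min_dom : minset (certified e) D -> minset (dominating e) D.
Proof.
move=> /minsetP [_ Hm].
case: (set_0Vmem D0) => [D0e | [u uD0]].
  apply/minsetP; split; first exact: domD.
  move=> B domB BD; apply: Hm => //; apply/andP; split => //.
  apply/forall_inP => v vB; have vD := subsetP BD v vB.
  have vD0 : v \notin D0 by rewrite D0e inE.
  apply/orP; right; apply: leq_trans (notD0 vD vD0) _; apply: subset_leq_card.
  apply/subsetP => w; rewrite !inE => /andP [wD ewv]; rewrite ewv andbT.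
  by apply/negP => wB; rewrite (subsetP BD w wB) in wD.
exfalso.
have P0 : Pok [set u].
  move: (uD0); rewrite inE => /andP [uD NuD].
  rewrite /Pok /Aok; apply/and3P; split.
  - by rewrite sub1set.
  - by apply/set0Pn; exists u; exact: set11.
  - apply/forall_inP => z; rewrite inE => /eqP ->.
    have [w wN _] := two_elem u (deg u).
    apply/exists_inP; exists w; last by move: wN; rewrite inE.
    rewrite !inE (subsetP NuD w wN) andbT.
    by apply/eqP=> E'; rewrite E' inE eirr in wN.
case: (arg_maxnP (fun J : {set T} => #|J|) P0) => Jm PJm maxJm.
have P1 : Pok Jm && (#|Jm| == #|Jm|) by rewrite PJm eqxx.
case: (@arg_minnP _ Jm (fun J : {set T} => Pok J && (#|J| == #|Jm|)) mu P1)
  => J /andP [PJ /eqP cJ] minJ.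
have cert : certified e (D :\: J).
  apply: good => //.
    by move=> J' PJ'; rewrite cJ; exact: maxJm.
  by move=> J' PJ' cJ'; apply: minJ; rewrite PJ' cJ' cJ eqxx.
have EJ := Hm _ cert (subsetDl D J).
case/and3P: PJ => JD0 /set0Pn [x xJ] _.
have xD : x \in D by move: (subsetP JD0 x xJ); rewrite inE => /andP [].
by move: xD; rewrite -EJ inE xJ.
Qed.
End Main.

Theorem lemma3p4 (T : finType) (e : rel T) :
  simple_graph e -> min_deg_ge e 2 -> Gamma_cer e <= Gamma e.
Proof.
move=> [esym eirr] deg; apply/bigmax_leqP => D HD.
apply: leq_bigmax_cond.
have certD : certified e D by case/minsetP: HD.
exact: (min_cert_min_dom esym eirr deg certD HD).
Qed.
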